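(* Let $\prec$ be the lexicographic term order on $K[\mathbf T_{\lambda-\mu}]$ induced by the variable order $T_{rc}>T_{r'c'}$ if and only if $r<r'$, or $r=r'$ and $c<c'$. Then: (a) the 2-minors of $\mathbf T_{\lambda-\mu}$ form a Gröbner basis of $I_2(\mathbf T_{\lambda-\mu})$ with respect to $\prec$; (b) the 2-minors of $\mathbf S_{\lambda-\mu}$ form a Gröbner basis of $I_2(\mathbf S_{\lambda-\mu})$ with respect to $\prec$.
   Context: Let $K$ be a field. Fix an integer $n\ge1$, a partition $\lambda=(\lambda_1,\dots,\lambda_n)$ of positive integers with $m:=\lambda_1\ge\lambda_2\ge\cdots\ge\lambda_n$, and an integer vector $\mu=(\mu_1,\dots,\mu_n)$ with $0\le\mu_1\le\cdots\le\mu_n<\lambda_n$ and $\mu_i\ge i-1$ for all $i$. The tableau $\mathbf T_{\lambda-\mu}$ is the set of positions $\{(i,j):1\le i\le n,\ \mu_i<j\le\lambda_i\}$ in an $m\times m$ array, and $K[\mathbf T_{\lambda-\mu}]$ is the polynomial ring over $K$ in the variables $T_{ij}$, $(i,j)\in\mathbf T_{\lambda-\mu}$; the entry of $\mathbf T_{\lambda-\mu}$ at $(i,j)$ is $T_{ij}$. The symmetrized tableau $\mathbf S_{\lambda-\mu}$ is the partially filled $m\times m$ array with set of positions $\{(i,j):(i,j)\in\mathbf T_{\lambda-\mu}\text{ or }(j,i)\in\mathbf T_{\lambda-\mu}\}$, whose entry at $(i,j)$ is $T_{ij}$ if $(i,j)\in\mathbf T_{\lambda-\mu}$ and $T_{ji}$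 otherwise (this is well defined; $\mathbf S_{\lambda-\mu}$ may have holes). For such an array $A$ with set of positions $P$ and entries $a_{ij}$, a 2-minor of $A$ is a polynomial $a_{ij}a_{kl}-a_{il}a_{kj}$ with $i<k$, $j<l$ and $(i,j),(i,l),(k,j),(k,l)\in P$. $I_2(\mathbf T_{\lambda-\mu})$ and $I_2(\mathbf S_{\lambda-\mu})$ denote the ideals of $K[\mathbf T_{\lambda-\mu}]$ generated by the 2-minors of $\mathbf T_{\lambda-\mu}$ and of $\mathbf S_{\lambda-\mu}$, respectively. *)

(* Defs.v *)
From HB Require Import structures.
From mathcomp Require Import all_boot all_order all_algebra.
Set Implicit Arguments. Unset Strict Implicit. Unset Printing Implicit Defensive.
Import GRing.Theory.
Local Open Scope ring_scope.

Section Poly.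
Variables (V : finType) (K : fieldType).

Definition mono := {ffun V -> nat}.
Definition madd (a b : mono) : mono := [ffun v => (a v + b v)%N].
Definition msub (a b : mono) : mono := [ffun v => (a v - b v)%N].
Definition mdiv (a b : mono) : bool := [forall v, (a v <= b v)%N].
Definition mdeg (a : mono) : nat := (\sum_v a v)%N.
Definition evar (x : V) : mono := [ffun v => nat_of_bool (v == x)].

(* a polynomial is its coefficient function; genuine polynomials have finite support *)
Definition polyf := mono -> K.
Definition finsupp (f : polyf) : Prop :=
  exists s : seq mono, forall m, f m != 0 -> m \in s.

(* product: (f*g)(m) = sum over the divisors a of m of f(a) g(m-a) *)
Definition mval (N : nat) (a : {ffun V -> 'I_N}) : mono := [ffun v => val (a v)].
Definition pmul (f g : polyf) : polyf := fun m =>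
  \sum_(a : {ffun V -> 'I_(mdeg m).+1} | [forall v, (val (a v) <= m v)%N])
     f (mval a) * g (msub m (mval a)).

Definition in_ideal (G : polyf -> Prop) (f : polyf) : Prop :=
  exists (r : nat) (gs hs : 'I_r -> polyf),
    (forall i, G (gs i)) /\ (forall i, finsupp (hs i)) /\
    forall m, f m = \sum_(i < r) pmul (hs i) (gs i) m.

Definition is_lead (mlt : mono -> mono -> Prop) (f : polyf) (m : mono) : Prop :=
  f m != 0 /\ forall m', f m' != 0 -> m' = m \/ mlt m' m.

Definition groebner (mlt : mono -> mono -> Prop) (G : polyf -> Prop) : Prop :=
  forall f, in_ideal G f -> (exists m, f m != 0) ->
    exists g mg mf, G g /\ is_lead mlt g mg /\ is_lead mlt f mf /\ mdiv mg mf.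

(* lexicographic order induced by a strict variable order vgt (vgt w v : w > v):
   a < b iff at the largest variable where exponents differ, b's is bigger *)
Definition lexlt (vgt : V -> V -> bool) (a b : mono) : Prop :=
  exists v, (a v < b v)%N /\ forall w, vgt w v -> a w = b w.

Definition minorpoly (a d b c : V) : polyf := fun m =>
  ((m == madd (evar a) (evar d))%:R - (m == madd (evar b) (evar c))%:R).

(* 2-minors of a partially filled array A (None = no position) *)
Definition minors2 (A : nat -> nat -> option V) (g : polyf) : Prop :=
  exists i k j l a d b c,
    (i < k)%N /\ (j < l)%N /\
    A i j = Some a /\ A k l = Some d /\ A i l = Some b /\ A k j = Some c /\
    g = minorpoly a d b c.
End Poly.

(* positions of T_{lambda-mu}: (i,j), 1<=i<=n, mu i < j <= lam i (1-based) *)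
Definition Tpos (n : nat) (lam mu : nat -> nat) : seq (nat * nat) :=
  [seq (i, j) | i <- iota 1 n, j <- iota (mu i).+1 (lam i - mu i)].

Definition TVar (n : nat) (lam mu : nat -> nat) : finType :=
  seq_sub (Tpos n lam mu).

Definition Tarr n lam mu (i j : nat) : option (TVar n lam mu) :=
  insub (i, j).

Definition Sarr n lam mu (i j : nat) : option (TVar n lam mu) :=
  if insub (i, j) is Some v then Some v else insub (j, i).

Definition tvar_gt n lam mu (w v : TVar n lam mu) : bool :=
  ((val w).1 < (val v).1)%N || (((val w).1 == (val v).1) && ((val w).2 < (val v).2)%N).

(* Main.v *)
Require Import Defs.
From HB Require Import structures.
From mathcomp Require Import all_boot all_order all_algebra.
From mathcomp Require Import zify.
From Stdlib Require Import Classical FunctionalExtensionality.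
Set Implicit Arguments. Unset Strict Implicit. Unset Printing Implicit Defensive.
Import GRing.Theory.

Section Mono.
Variable V : finType.

Lemma mval_inj N : injective (@mval V N).
Proof.
move=> a b H; apply/ffunP => v; apply/val_inj.
by have := congr1 (fun f : mono V => f v) H; rewrite /mval !ffunE.
Qed.

Lemma leq_mdeg (m : mono V) v : (m v <= mdeg m)%N.
Proof. by rewrite /mdeg (bigD1 v) //= leq_addr. Qed.

Lemma mdivP (a b : mono V) : reflect (forall v, a v <= b v)%N (mdiv a b).
Proof. exact: forallP. Qed.

Lemma msubK (m p : mono V) : mdiv p m -> madd (msub m p) p = m.
Proof. by move/mdivP=> H; apply/ffunP=> v; rewrite !ffunE subnK. Qed.

Lemma maddK (a p : mono V) : msub (madd a p) p = a.
Proof. by apply/ffunP=> v; rewrite !ffunE addnK. Qed.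

Lemma mdiv_madd (a p : mono V) : mdiv p (madd a p).
Proof. by apply/mdivP=> v; rewrite ffunE leq_addl. Qed.

Definition cnt (w : V -> nat) (m : mono V) : nat := (\sum_v w v * m v)%N.

Lemma cntD w a b : cnt w (madd a b) = (cnt w a + cnt w b)%N.
Proof. by rewrite /cnt -big_split /=; apply: eq_bigr => v _; rewrite ffunE mulnDr. Qed.

Lemma cnt_evar w x : cnt w (evar x) = w x.
Proof.
rewrite /cnt (bigD1 x) //= big1 ?addn0; first by rewrite ffunE eqxx muln1.
by move=> v Hv; rewrite ffunE (negbTE Hv) muln0.
Qed.

End Mono.

Section Order.
Variable V : finType.
Variable rk : V -> nat.
Hypothesis rk_inj : injective rk.
Definition rkgt (w v : V) : bool := (rk w < rk v)%N.

Lemma lexlt_irr (a : mono V) : ~ lexlt rkgt a a.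
Proof. by case=> v [H _]; rewrite ltnn in H. Qed.

Lemma lexlt_trans (a b c : mono V) : lexlt rkgt a b -> lexlt rkgt b c -> lexlt rkgt a c.
Proof.
move=> [v1 [H1 E1]] [v2 [H2 E2]].
case: (ltngtP (rk v1) (rk v2)) => Hr.
- exists v1; split; first by rewrite (E2 v1 Hr) in H1.
  move=> w Hw; rewrite E1 // E2 //; exact: ltn_trans Hw Hr.
- exists v2; split; first by rewrite (E1 v2 Hr).
  move=> w Hw; rewrite E1 ?E2 //; exact: ltn_trans Hw Hr.
- have Hv := rk_inj Hr; subst v2; exists v1; split; first exact: ltn_trans H1 H2.
  by move=> w Hw; rewrite E1 ?E2.
Qed.

Lemma lexlt_total (a b : mono V) : a <> b -> lexlt rkgt a b \/ lexlt rkgt b a.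
Proof.
move=> Hab.
have [v0 Hv0] : exists v, a v != b v.
  apply: NNPP => Hn; apply: Hab; apply/ffunP=> v.
  by case: (eqVneq (a v) (b v)) => // Hv; case: Hn; exists v.
case: (@arg_minnP _ v0 (fun v => a v != b v) rk Hv0) => v Hv Hmin.
have E : forall w, rkgt w v -> a w = b w.
  move=> w Hw; apply/eqP; apply/negP=> /negP Hw'.
  by have := Hmin w Hw'; rewrite leqNgt; move: Hw; rewrite /rkgt => ->.
case: (ltngtP (a v) (b v)) => H.
- by left; exists v.
- by right; exists v; split=> // w Hw; rewrite E.
- by rewrite H eqxx in Hv.
Qed.

Lemma lexlt_add (a b c : mono V) : lexlt rkgt a b -> lexlt rkgt (madd c a) (madd c b).
Proof.
move=> [v [H E]]; exists v; split; first by rewrite !ffunE ltn_add2l.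
by move=> w Hw; rewrite !ffunE E.
Qed.

End Order.

Lemma list_max (T : eqType) (R : T -> T -> Prop)
  (Rtr : forall a b c, R a b -> R b c -> R a c)
  (Rtot : forall a b, a <> b -> R a b \/ R b a) (l : seq T) :
  l != [::] -> exists M, M \in l /\ forall m, m \in l -> m = M \/ R m M.
Proof.
elim: l => // x l IH _.
case: l IH => [|y l] IH.
  by exists x; split; rewrite ?mem_seq1 // => m; rewrite mem_seq1 => /eqP ->; left.
have [M [HM HMl]] := IH isT.
case: (classic (x = M)) => [Hx|Hne]; first subst M.
  exists x; split; first by rewrite mem_head.
  move=> m; rewrite in_cons => /orP [/eqP ->|Hm]; [by left|exact: HMl].
case: (Rtot _ _ Hne) => H.
- exists M; split; first by rewrite in_cons HM orbT.
  move=> m; rewrite in_cons => /orP [/eqP ->|Hm]; [by right|exact: HMl].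
- exists x; split; first by rewrite mem_head.
  move=> m; rewrite in_cons => /orP [/eqP ->|Hm]; first by left.
  by case: (HMl m Hm) => [->|H']; right=> //; exact: Rtr H' H.
Qed.

Section GB.
Variables (V : finType) (K : fieldType).
Variables (I : finType) (W : I -> V -> nat).
Definition feq (m1 m2 : mono V) := [forall i, cnt (W i) m1 == cnt (W i) m2].
Hypothesis Hdeg : forall m1 m2, feq m1 m2 -> mdeg m1 = mdeg m2.

Definition fibl (M : mono V) : seq (mono V) :=
  [seq mval b | b <- enum [pred b : {ffun V -> 'I_(mdeg M).+1} | feq (mval b) M]].

Lemma fibl_uniq M : uniq (fibl M).
Proof. rewrite map_inj_uniq ?enum_uniq //; exact: mval_inj. Qed.

Lemma mem_fibl M m : (m \in fibl M) = feq m M.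
Proof.
apply/idP/idP.
  by case/mapP=> b; rewrite mem_enum inE => H ->.
move=> H.
pose b : {ffun V -> 'I_(mdeg M).+1} := [ffun v => inord (m v)].
have Hb : mval b = m.
  apply/ffunP=> v; rewrite /mval ffunE /b ffunE /= inordK // ltnS -(Hdeg H); exact: leq_mdeg.
by rewrite -Hb; apply: map_f; rewrite mem_enum inE Hb H.
Qed.

Lemma feq_add a p q M : feq p q -> feq (madd a p) M = feq (madd a q) M.
Proof.
move=> /forallP H; apply: eq_forallb => i.
by rewrite !cntD (eqP (H i)).
Qed.

Lemma sum_pick (T : eqType) (l : seq T) (F : T -> K) y : uniq l ->
  (\sum_(a <- l) F a * (a == y)%:R = if y \in l then F y else 0)%R.
Proof.
elim: l => [|x l IH]; first by rewrite big_nil.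
rewrite big_cons /= in_cons => /andP [Hx Hl]; rewrite IH //.
case: (eqVneq x y) => [<-|Hxy] /=; first by rewrite (negbTE Hx) mulr1 addr0.
by rewrite mulr0 add0r.
Qed.

Lemma pick_eq (h : polyf V K) (s : seq (mono V)) (p m : mono V) :
  (forall a, h a != 0%R -> a \in s) ->
  ((if mdiv p m then h (msub m p) else 0) =
    \sum_(a <- undup s) h a * (madd a p == m)%:R)%R.
Proof.
move=> Hs; case: ifP => Hd.
  have E : forall a, (madd a p == m) = (a == msub m p).
    move=> a; apply/eqP/eqP => [<-|->]; [by rewrite maddK | exact: msubK].
  under eq_bigr do rewrite E.
  rewrite sum_pick ?undup_uniq // mem_undup.
  by case: ifP => // Hn; apply/eqP; apply: contraFT Hn => /Hs.
rewrite big1 // => a _.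
case: (eqVneq (madd a p) m) => [E|]; last by rewrite mulr0.
by rewrite -E mdiv_madd in Hd.
Qed.

Lemma fib_sum (h : polyf V K) (s : seq (mono V)) p q M :
  (forall a, h a != 0%R -> a \in s) -> feq p q ->
  (\sum_(m <- fibl M) ((if mdiv p m then h (msub m p) else 0) -
      (if mdiv q m then h (msub m q) else 0)) = 0)%R.
Proof.
move=> Hs Hpq.
have E : forall r, (\sum_(m <- fibl M) (if mdiv r m then h (msub m r) else 0) =
     \sum_(a <- undup s) h a * (feq (madd a r) M)%:R)%R.
  move=> r; under eq_bigr do rewrite (pick_eq r _ Hs).
  rewrite exchange_big /=; apply: eq_bigr => a _.
  rewrite -big_distrr /=; congr (_ * _)%R.
  under eq_bigr do rewrite eq_sym.
  transitivity (\sum_(i <- fibl M) (fun=> 1%R : K) i * (i == madd a r)%:R)%R; first by apply: eq_bigr => i _; rewrite mul1r.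
  rewrite (@sum_pick _ _ (fun=> 1%R)) ?fibl_uniq // mem_fibl.
  by case: (feq _ _).
by rewrite sumrB !E; under eq_bigr do rewrite (feq_add _ _ Hpq); rewrite subrr.
Qed.

Lemma pmul_ext (h g g' : polyf V K) m : (forall m, g m = g' m) -> pmul h g m = pmul h g' m.
Proof. by move=> H; rewrite /pmul; apply: eq_bigr => a _; rewrite H. Qed.

Lemma sum_onept (h : polyf V K) p m :
  (\sum_(a : {ffun V -> 'I_(mdeg m).+1} | [forall v, (val (a v) <= m v)%N])
     h (mval a) * (msub m (mval a) == p)%:R = if mdiv p m then h (msub m p) else 0)%R.
Proof.
case: ifP => Hd.
  pose a0 : {ffun V -> 'I_(mdeg m).+1} := [ffun v => inord (msub m p v)].
  have Ha0 : mval a0 = msub m p.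
    apply/ffunP=> v; rewrite /mval ffunE /a0 ffunE /= inordK // ltnS.
    rewrite ffunE; exact: leq_trans (leq_subr _ _) (leq_mdeg _ _).
  have Hle : [forall v, (val (a0 v) <= m v)%N].
    apply/forallP=> v; have := congr1 (fun f : mono V => f v) Ha0.
    by rewrite /mval ffunE => ->; rewrite ffunE leq_subr.
  rewrite (bigD1 a0) //= big1 ?addr0.
    rewrite Ha0; move/mdivP: Hd => Hd.
    have -> : msub m (msub m p) = p by apply/ffunP=> v; rewrite !ffunE subKn.
    by rewrite eqxx mulr1.
  move=> a /andP [/forallP Ha Hne].
  case: (eqVneq (msub m (mval a)) p) => [E|]; last by rewrite mulr0.
  case/negP: Hne; apply/eqP/(@mval_inj _ (mdeg m).+1); rewrite Ha0 -E.
  by apply/ffunP=> v; rewrite !ffunE subKn //; exact: Ha.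
rewrite big1 // => a /forallP Ha.
case: (eqVneq (msub m (mval a)) p) => [E|]; last by rewrite mulr0.
case/negP: Hd; rewrite -E; apply/mdivP=> v; rewrite ffunE; exact: leq_subr.
Qed.

Definition bin (p q : mono V) : polyf V K := fun m => ((m == p)%:R - (m == q)%:R)%R.

Lemma pmul_bin (h : polyf V K) p q m :
  pmul h (bin p q) m = ((if mdiv p m then h (msub m p) else 0) -
                        (if mdiv q m then h (msub m q) else 0))%R.
Proof.
rewrite /pmul /bin; under eq_bigr do rewrite mulrBr.
by rewrite sumrB !sum_onept.
Qed.
End GB.

Section GB3.
Variables (V : finType) (K : fieldType).
Variables (I : finType) (W : I -> V -> nat).
Hypothesis Hdeg : forall m1 m2, feq W m1 m2 -> mdeg m1 = mdeg m2.

Lemma feq_refl m : feq W m m.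
Proof. by apply/forallP=> i. Qed.

Lemma finsupp_sum r (F : 'I_r -> polyf V K) :
  (forall i, finsupp (F i)) -> finsupp (fun m => \sum_(i < r) F i m)%R.
Proof.
elim: r F => [|r IH] F HF.
  by exists [::] => m; rewrite big_ord0 eqxx.
have [s1 Hs1] := IH (fun i => F (widen_ord (leqnSn r) i)) (fun i => HF _).
have [s2 Hs2] := HF ord_max.
exists (s1 ++ s2) => m; rewrite big_ord_recr /= mem_cat => H.
case: (eqVneq (\sum_(i < r) F (widen_ord (leqnSn r) i) m)%R 0%R) => H1.
  by rewrite H1 add0r in H; rewrite Hs2 ?orbT.
by rewrite Hs1.
Qed.

Lemma finsupp_pmul_bin (h : polyf V K) p q :
  finsupp h -> finsupp (fun m => pmul h (bin K p q) m).
Proof.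
move=> [s Hs]; exists ([seq madd a p | a <- s] ++ [seq madd a q | a <- s]) => m.
have Z : forall r, (mdiv r m && (h (msub m r) != 0%R)) = false ->
    (if mdiv r m then h (msub m r) else 0%R) = 0%R.
  by move=> r; case: ifP => // Hr; move/negbT; rewrite /= negbK => /eqP.
rewrite pmul_bin mem_cat => H; apply/orP.
case Ep: (mdiv p m && (h (msub m p) != 0%R)).
  by left; case/andP: Ep => Hp Hh; rewrite -(msubK Hp); exact: map_f (Hs _ Hh).
case Eq: (mdiv q m && (h (msub m q) != 0%R)).
  by right; case/andP: Eq => Hp Hh; rewrite -(msubK Hp); exact: map_f (Hs _ Hh).
by move: H; rewrite !Z // subrr eqxx.
Qed.

Section Main.
Variable rk : V -> nat.
Hypothesis rk_inj : injective rk.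
Variable G : polyf V K -> Prop.
Hypothesis HG : forall g, G g -> exists p q, (forall m, g m = bin K p q m) /\ feq W p q.
Hypothesis Hc : forall M m', feq W m' M -> lexlt (rkgt rk) m' M ->
  exists g mg, G g /\ is_lead (lexlt (rkgt rk)) g mg /\ mdiv mg M.

Theorem gen_groebner : groebner (lexlt (rkgt rk)) G.
Proof.
move=> f [r [gs [hs [HGs [Hh Hf]]]]] [m0 Hm0].
have Hp : forall i, exists p q, (forall m, gs i m = bin K p q m) /\ feq W p q.
  by move=> i; exact: HG.
have [s Hs] : finsupp f.
  have [s Hs] : finsupp (fun m => \sum_(i < r) pmul (hs i) (gs i) m)%R.
    apply: finsupp_sum => i; have [p [q [E _]]] := Hp i.
    have [s Hs] := finsupp_pmul_bin p q (Hh i).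
    by exists s => m; rewrite (pmul_ext _ _ E); exact: Hs.
  by exists s => m; rewrite Hf; exact: Hs.
have Hl : [seq m <- undup s | f m != 0%R] != [::].
  apply/eqP => E; have : m0 \in [seq m <- undup s | f m != 0%R].
    by rewrite mem_filter Hm0 mem_undup Hs.
  by rewrite E.
have [M [HM HMl]] := @list_max _ (lexlt (rkgt rk)) (@lexlt_trans _ _ rk_inj) (@lexlt_total _ rk) _ Hl.
have HfM : is_lead (lexlt (rkgt rk)) f M.
  rewrite mem_filter in HM; case/andP: HM => HM _; split=> // m' Hm'.
  by apply: HMl; rewrite mem_filter Hm' mem_undup Hs.
case: (classic (exists m', [/\ feq W m' M, f m' != 0%R & m' <> M])).
  move=> [m' [H1 H2 H3]].
  have Hlt : lexlt (rkgt rk) m' M by case: HfM => _ /(_ m' H2) [].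
  have [g [mg [Hg [Hlg Hd]]]] := Hc H1 Hlt.
  by exists g, mg, M.
move=> Hn; exfalso.
have E1 : (\sum_(m <- fibl W M) f m = f M)%R.
  rewrite (bigD1_seq M) ?fibl_uniq ?mem_fibl ?feq_refl //= big1_seq ?addr0 //.
  move=> m /andP [Hm Hin]; rewrite mem_fibl // in Hin.
  case: (eqVneq (f m) 0%R) => // Hfm; case: Hn; exists m; split=> //.
  by move/eqP: Hm.
have E2 : (\sum_(m <- fibl W M) f m = 0)%R.
  under eq_bigr do rewrite Hf.
  rewrite exchange_big /= big1 // => i _.
  have [p [q [E Hpq]]] := Hp i.
  under eq_bigr do rewrite (pmul_ext _ _ E) pmul_bin.
  have [s' Hs'] := Hh i.
  exact: fib_sum Hs' Hpq.
by case: HfM => /eqP; rewrite -E1 E2.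
Qed.
End Main.

End GB3.

Section Conc.
Variables (n : nat) (lam mu : nat -> nat).
Hypothesis Hlam : forall i, (1 <= i)%N -> (i < n)%N -> (lam i.+1 <= lam i)%N.
Hypothesis Hmu : forall i, (1 <= i)%N -> (i < n)%N -> (mu i <= mu i.+1)%N.
Hypothesis Hmui : forall i, (1 <= i <= n)%N -> (i.-1 <= mu i)%N.

Local Notation V := (TVar n lam mu).
Local Notation TP := (Tpos n lam mu).
Local Notation TA := (@Tarr n lam mu).
Local Notation SA := (@Sarr n lam mu).

Lemma memTpos i j : ((i, j) \in TP) = (1 <= i <= n) && (mu i < j <= lam i).
Proof.
apply/allpairsPdep/idP.
  move=> [x [y [Hx Hy [-> ->]]]]; move: Hx Hy; rewrite !mem_iota; lia.
move=> H; exists i, j; split=> //; rewrite mem_iota; lia.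
Qed.

Lemma vP (v : V) : (1 <= (val v).1 <= n) && (mu (val v).1 < (val v).2 <= lam (val v).1).
Proof. by rewrite -memTpos -surjective_pairing; exact: (ssvalP v). Qed.

Lemma lam_anti i k : (1 <= i)%N -> (i <= k)%N -> (k <= n)%N -> (lam k <= lam i)%N.
Proof.
move=> H1; elim: k => [|k IH] Hk Hkn; first by lia.
case: (ltngtP i k.+1) => Hik; last by rewrite Hik.
  apply: leq_trans (Hlam _ _) (IH _ _); lia.
by lia.
Qed.

Lemma mu_mono i k : (1 <= i)%N -> (i <= k)%N -> (k <= n)%N -> (mu i <= mu k)%N.
Proof.
move=> H1; elim: k => [|k IH] Hk Hkn; first by lia.
case: (ltngtP i k.+1) => Hik; last by rewrite Hik.
  apply: leq_trans (IH _ _) (Hmu _ _); lia.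
by lia.
Qed.

Lemma Tpos_le (v : V) : ((val v).1 <= (val v).2)%N.
Proof. have := vP v; have := @Hmui (val v).1; lia. Qed.

Lemma Tarr_some i j (a : V) : TA i j = Some a -> val a = (i, j).
Proof. by rewrite /Tarr; case: insubP => // u _ Hu [<-]. Qed.

Lemma Tarr_val (a : V) : TA (val a).1 (val a).2 = Some a.
Proof. by rewrite /Tarr -surjective_pairing valK. Qed.

Lemma Tarr_mk i j : ((i, j) \in TP) -> exists a : V, TA i j = Some a /\ val a = (i, j).
Proof.
move=> H; exists (Sub (i, j) H); split; first by rewrite /Tarr insubT.
by [].
Qed.

Lemma Sarr_some i j (a : V) : SA i j = Some a -> val a = (i, j) \/ val a = (j, i).
Proof.
rewrite /Sarr; case: insubP => [u _ Hu [<-]|_]; first by left.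
by case: insubP => // u _ Hu [<-]; right.
Qed.

Lemma Sarr_of_Tarr i j (a : V) : TA i j = Some a -> SA i j = Some a.
Proof. by rewrite /Sarr /Tarr => ->. Qed.

Lemma Sarr_val i j (a : V) : val a = (i, j) \/ val a = (j, i) -> SA i j = Some a.
Proof.
move=> [Ha|Ha]; first by rewrite /Sarr -Ha valK.
rewrite /Sarr; case: insubP => [u Hu Hval|_]; last by rewrite -Ha valK.
have Hle1 := Tpos_le u; have Hle2 := Tpos_le a.
rewrite Hval Ha /= in Hle1 Hle2.
have Eij : i = j by lia.
subst j; congr Some; apply: val_inj; by rewrite Hval Ha.
Qed.

Definition Bd : nat := (\max_(v : V) ((val v).1 + (val v).2)).+1.

Lemma Bd1 (v : V) : ((val v).1 < Bd)%N.
Proof. rewrite /Bd ltnS; apply: leq_trans (leq_bigmax v); lia. Qed.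
Lemma Bd2 (v : V) : ((val v).2 < Bd)%N.
Proof. rewrite /Bd ltnS; apply: leq_trans (leq_bigmax v); lia. Qed.

Definition rk (v : V) : nat := ((val v).1 * Bd + (val v).2)%N.

Lemma rk_lt (w v : V) : (rk w < rk v)%N = tvar_gt w v.
Proof.
rewrite /rk /tvar_gt.
have := Bd2 w; have := Bd2 v.
move: (val w).1 (val w).2 (val v).1 (val v).2 Bd => a b c d B Hd Hb.
apply/idP/idP.
  case: (ltngtP a c) => Hac.
  - by rewrite orTb.
  - move=> H; exfalso; nia.
  - by subst; rewrite ltn_add2l => ->.
case/orP => [Hac|/andP [/eqP -> Hbd]]; last by rewrite ltn_add2l.
nia.
Qed.

Lemma rk_inj : injective rk.
Proof.
move=> w v E; apply/val_inj.
have H1 := rk_lt w v; have H2 := rk_lt v w.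
rewrite E ltnn in H1 H2.
move: H1 H2; rewrite /tvar_gt.
case: (val w) (val v) => a b [c d] /=.
move=> H1 H2; have [E1 E2] : a = c /\ b = d by lia.
by subst.
Qed.

Lemma rkgtE : rkgt rk = @tvar_gt n lam mu.
Proof.
apply: FunctionalExtensionality.functional_extensionality => w.
apply: FunctionalExtensionality.functional_extensionality => v.
by rewrite /rkgt rk_lt.
Qed.

End Conc.

Lemma sum_lt (T : finType) (F G : T -> nat) x :
  (forall v, F v <= G v)%N -> (F x < G x)%N -> (\sum_v F v < \sum_v G v)%N.
Proof.
move=> H Hx; rewrite (bigD1 x) //= [X in (_ < X)%N](bigD1 x) //=.
by rewrite -addSn leq_add // leq_sum.
Qed.

Section Lead.
Variables (V : finType) (K : fieldType) (vgt : V -> V -> bool).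
Lemma lead_top (a d b c : V) : b != a -> c != a -> ~~ vgt a a ->
  (forall w, vgt w a -> [&& w != d, w != b & w != c]) ->
  is_lead (lexlt vgt) (minorpoly K a d b c) (madd (evar a) (evar d)).
Proof.
move=> Hba Hca Haa Hw.
set p := madd (evar a) (evar d); set q := madd (evar b) (evar c).
have Hq : lexlt vgt q p.
  exists a; split; first by rewrite /p /q !ffunE eqxx (eq_sym a b) (eq_sym a c) (negbTE Hba) (negbTE Hca).
  move=> w Hwa; have /and3P [H1 H2 H3] := Hw w Hwa.
  have Hwa' : w != a by apply/eqP => E; move: Hwa; rewrite E (negbTE Haa).
  by rewrite /p /q !ffunE (negbTE H1) (negbTE H2) (negbTE H3) (negbTE Hwa').
have Hpq : p != q.
  by apply/eqP => E; case: Hq => v [H _]; rewrite E ltnn in H.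
split; first by rewrite /minorpoly -/p -/q eqxx (negbTE Hpq) subr0 oner_eq0.
move=> m; rewrite /minorpoly -/p -/q.
case: (eqVneq m p) => [->|Hmp]; first by left.
case: (eqVneq m q) => [->|Hmq]; first by right.
by rewrite subrr eqxx.
Qed.

Lemma lead_cases (a d b c : V) mg :
  is_lead (lexlt vgt) (minorpoly K a d b c) mg ->
  exists o, [/\ (mg == madd (evar a) (evar d)) && (o == madd (evar b) (evar c)) ||
              (mg == madd (evar b) (evar c)) && (o == madd (evar a) (evar d)) ,
              lexlt vgt o mg & o != mg].
Proof.
set p := madd (evar a) (evar d); set q := madd (evar b) (evar c).
move=> [H1 H2]; move: H1 H2; rewrite /minorpoly -/p -/q => H1 H2.
have Hpq : p != q by apply: contraNneq H1 => ->; rewrite subrr.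
case: (eqVneq mg p) => [Ep|Hp].
  subst mg; exists q; have Hqp : q != p by rewrite eq_sym.
  split; [by rewrite !eqxx | | by []].
  case: (H2 q); [by rewrite (negbTE Hqp) eqxx sub0r oppr_eq0 oner_eq0|move=> E|by []].
  by rewrite E eqxx in Hqp.
case: (eqVneq mg q) => [Eq|Hq]; last by move: H1; rewrite (negbTE Hp) (negbTE Hq) subrr eqxx.
subst mg; exists p; split; [by rewrite !eqxx orbT | | by []].
case: (H2 p); [by rewrite (negbTE Hpq) eqxx subr0 oner_eq0|move=> E|by []].
by rewrite E eqxx in Hpq.
Qed.
End Lead.

Section W.
Variables (n : nat) (lam mu : nat -> nat).
Local Notation V := (TVar n lam mu).
Local Notation B := (Bd n lam mu).

Definition WT (cb : 'I_B * bool) (v : V) : nat :=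
  if cb.2 then ((val v).1 == cb.1) else ((val v).2 == cb.1).
Definition WS (c : 'I_B) (v : V) : nat := (((val v).1 == c) + ((val v).2 == c))%N.

Lemma cnt_proj (f : V -> nat) (phi : nat -> nat) (m : mono V) :
  (forall v, f v < B)%N ->
  (\sum_v phi (f v) * m v = \sum_(c < B) phi c * \sum_v (f v == c) * m v)%N.
Proof.
move=> Hf.
under [RHS]eq_bigr do rewrite big_distrr /=.
rewrite exchange_big /=; apply: eq_bigr => v _.
rewrite (bigD1 (Ordinal (Hf v))) //= eqxx mul1n big1 ?addn0 //.
move=> c Hc; have -> : (f v == c) = false.
  by apply: contraNF Hc => /eqP E; apply/eqP/val_inj; rewrite /= E.
by rewrite mul0n muln0.
Qed.

Lemma feqT_row (m1 m2 : mono V) (phi : nat -> nat) : feq WT m1 m2 ->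
  (\sum_v phi (val v).1 * m1 v = \sum_v phi (val v).1 * m2 v)%N.
Proof.
move=> /forallP H; rewrite !(cnt_proj (f := fun v : V => (val v).1)) //; try exact: Bd1.
apply: eq_bigr => c _; congr (_ * _)%N; exact: (eqP (H (c, true))).
Qed.

Lemma feqT_col (m1 m2 : mono V) (phi : nat -> nat) : feq WT m1 m2 ->
  (\sum_v phi (val v).2 * m1 v = \sum_v phi (val v).2 * m2 v)%N.
Proof.
move=> /forallP H; rewrite !(cnt_proj (f := fun v : V => (val v).2)) //; try exact: Bd2.
apply: eq_bigr => c _; congr (_ * _)%N; exact: (eqP (H (c, false))).
Qed.

Lemma feqS_sum (m1 m2 : mono V) (phi : nat -> nat) : feq WS m1 m2 ->
  (\sum_v (phi (val v).1 + phi (val v).2) * m1 v = \sum_v (phi (val v).1 + phi (val v).2) * m2 v)%N.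
Proof.
move=> /forallP H.
have E : forall m : mono V, (\sum_v (phi (val v).1 + phi (val v).2) * m v =
   \sum_(c < B) phi c * cnt (WS c) m)%N.
  move=> m; under eq_bigr do rewrite mulnDl; rewrite big_split /=.
  rewrite (cnt_proj (f := fun v : V => (val v).1)) ?(cnt_proj (f := fun v : V => (val v).2)); try (move=> v; first [exact: Bd1|exact: Bd2]).
  rewrite -big_split /=; apply: eq_bigr => c _; rewrite -mulnDr /cnt -big_split /=.
  by congr (_ * _)%N; apply: eq_bigr => v _; rewrite /WS mulnDl.
by rewrite !E; apply: eq_bigr => c _; rewrite (eqP (H c)).
Qed.

Lemma HdegT m1 m2 : feq WT m1 m2 -> mdeg m1 = mdeg m2.
Proof.
move=> H; have := feqT_row (fun=> 1%N) H.
by rewrite /mdeg; under eq_bigr do rewrite mul1n; under [RHS]eq_bigr do rewrite mul1n.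
Qed.

Lemma HdegS m1 m2 : feq WS m1 m2 -> mdeg m1 = mdeg m2.
Proof.
move=> H; have := feqS_sum (fun=> 1%N) H.
rewrite /mdeg; under eq_bigr do rewrite mulnC; under [RHS]eq_bigr do rewrite mulnC.
by rewrite -!big_distrl /= => /eqP; rewrite eqn_mul2r /= => /eqP.
Qed.

End W.

Definition rw n lam mu (v : TVar n lam mu) : nat := (ssval v).1.
Definition cl n lam mu (v : TVar n lam mu) : nat := (ssval v).2.

Lemma vP4 n lam mu (v : TVar n lam mu) : [/\ (1 <= rw v)%N, (rw v <= n)%N,
  (mu (rw v) < cl v)%N & (cl v <= lam (rw v))%N].
Proof. by have /and3P [/andP [? ?] ? ?] := vP v. Qed.

Lemma tvar_gtE n lam mu (w v : TVar n lam mu) :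
  tvar_gt w v = (rw w < rw v)%N || (rw w == rw v) && (cl w < cl v)%N.
Proof. by []. Qed.

Lemma TV_eq n lam mu (a b : TVar n lam mu) : rw a = rw b -> cl a = cl b -> a = b.
Proof.
move=> H1 H2; apply: val_inj; rewrite /= [ssval a]surjective_pairing [ssval b]surjective_pairing.
by move: H1 H2; rewrite /rw /cl => -> ->.
Qed.

Lemma Tarr_mk' n lam mu i j : ((i, j) \in Tpos n lam mu) ->
  exists a : TVar n lam mu, Tarr n lam mu i j = Some a /\ rw a = i /\ cl a = j.
Proof. by move=> /Tarr_mk [a [H1 H2]]; exists a; rewrite /rw /cl; move: H2 => /= ->. Qed.

Lemma Tarr_rc n lam mu (a : TVar n lam mu) : Tarr n lam mu (rw a) (cl a) = Some a.
Proof. exact: Tarr_val. Qed.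

Section TC.
Variables (K : fieldType) (n : nat) (lam mu : nat -> nat).
Hypothesis Hlam : forall i, (1 <= i)%N -> (i < n)%N -> (lam i.+1 <= lam i)%N.
Local Notation V := (TVar n lam mu).
Local Notation TA := (@Tarr n lam mu).
Local Notation vgt := (@tvar_gt n lam mu).

Lemma T_comb (M m' : mono V) : feq (@WT n lam mu) m' M -> lexlt vgt m' M ->
  exists g mg, minors2 (K := K) TA g /\ is_lead (lexlt vgt) g mg /\ mdiv mg M.
Proof.
move=> Hf [x [Hx Hab]].
have [Hx1 Hx2 Hx3 Hx4] := vP4 x.
case: (classic (exists v : V, [/\ (0 < M v)%N, (rw x < rw v)%N,
        (cl x < cl v)%N & (mu (rw v) < cl x)%N])).
  move=> [v [Hv1 Hv2 Hv3 Hv4]].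
  have [Hv5 Hv6 Hv7 Hv8] := vP4 v.
  have Hla : (lam (rw v) <= lam (rw x))%N.
    by apply: (@lam_anti n lam Hlam); lia.
  have [b [Hb [Hb1 Hb2]]] : exists b : V, TA (rw x) (cl v) = Some b /\ rw b = rw x /\ cl b = cl v.
    by apply: Tarr_mk'; rewrite memTpos; lia.
  have [c [Hc [Hc1 Hc2]]] : exists c : V, TA (rw v) (cl x) = Some c /\ rw c = rw v /\ cl c = cl x.
    by apply: Tarr_mk'; rewrite memTpos; lia.
  exists (minorpoly K x v b c), (madd (evar x) (evar v)); split; [|split].
  - exists (rw x), (rw v), (cl x), (cl v), x, v, b, c.
    by do !split=> //; exact: Tarr_rc.
  - apply: lead_top.
    + by apply/eqP => E; move: Hb2; rewrite E; lia.
    + by apply/eqP => E; move: Hc1; rewrite E; lia.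
    + by rewrite tvar_gtE ltnn eqxx ltnn.
    + move=> w; rewrite tvar_gtE => Hw.
      by apply/and3P; split; apply/eqP => E; subst w; move: Hw; lia.
  - apply/mdivP => u; rewrite !ffunE.
    have Hxv : x != v by apply/eqP => E; subst v; lia.
    case: (eqVneq u x) => [->|Hux]; first by rewrite (negbTE Hxv) addn0; lia.
    by case: (eqVneq u v) => [->|]; [rewrite add0n | rewrite add0n].
move=> Hn; exfalso.
set i := rw x in Hx1 Hx2 Hx3 Hx4 Hn *; set j := cl x in Hx1 Hx2 Hx3 Hx4 Hn *.
pose w1 := fun v : V => nat_of_bool (cl v <= j)%N.
pose w2 := fun v : V => nat_of_bool ((i < rw v) && (mu (rw v) < j))%N.
have E1 : (\sum_v w1 v * m' v = \sum_v w1 v * M v)%N.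
  exact: (@feqT_col n lam mu _ _ (fun c => nat_of_bool (c <= j)%N) Hf).
have E2 : (\sum_v w2 v * m' v = \sum_v w2 v * M v)%N.
  exact: (@feqT_row n lam mu _ _ (fun r => nat_of_bool ((i < r) && (mu r < j))%N) Hf).
have Hpt : forall v, (w1 v * m' v + w2 v * M v <= w1 v * M v + w2 v * m' v)%N.
  move=> v; case: (eqVneq v x) => [->|Hvx].
    by rewrite /w1 /w2 -/i -/j leqnn ltnn /= !mul1n !mul0n !addn0; exact: ltnW.
  case Hg: (vgt v x); first by rewrite (Hab v Hg).
  have [Hw1 Hw2 Hw3 Hw4] := vP4 v.
  have Hne : (rw v != i) || (cl v != j).
    rewrite -negb_and; apply/negP => /andP [/eqP E1' /eqP E2']; case/eqP: Hvx; exact: TV_eq.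
  move: Hg Hne; rewrite tvar_gtE -/i -/j => Hg Hne.
  have Hn' : ~ [/\ (0 < M v)%N, (i < rw v)%N, (j < cl v)%N & (mu (rw v) < j)%N].
    by move=> H; apply: Hn; exists v.
  rewrite /w1 /w2.
  case: (posnP (M v)) => HM.
    rewrite HM !muln0; case: (leqP (cl v) j) => Hb; case: (boolP ((i < rw v) && (mu (rw v) < j))%N) => /= Hc;
    rewrite ?mul1n ?mul0n ?addn0 //; lia.
  case: (leqP (cl v) j) => Hb; case: (boolP ((i < rw v) && (mu (rw v) < j))%N) => /= Hc;
    rewrite ?mul1n ?mul0n ?addn0 ?add0n //;
    first [lia | (exfalso; apply: Hn'; split => //; lia)].
have Hst : (w1 x * m' x + w2 x * M x < w1 x * M x + w2 x * m' x)%N.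
  by rewrite /w1 /w2 -/i -/j leqnn ltnn /= !mul1n !mul0n !addn0.
have := sum_lt Hpt Hst.
by rewrite !big_split /= E1 E2 ltnn.
Qed.
End TC.

Section SC.
Variables (K : fieldType) (n : nat) (lam mu : nat -> nat).
Hypothesis Hlam : forall i, (1 <= i)%N -> (i < n)%N -> (lam i.+1 <= lam i)%N.
Hypothesis Hmu : forall i, (1 <= i)%N -> (i < n)%N -> (mu i <= mu i.+1)%N.
Hypothesis Hmui : forall i, (1 <= i <= n)%N -> (i.-1 <= mu i)%N.
Local Notation V := (TVar n lam mu).
Local Notation TA := (@Tarr n lam mu).
Local Notation SA := (@Sarr n lam mu).
Local Notation vgt := (@tvar_gt n lam mu).
Local Notation B := (Bd n lam mu).

Lemma lexT_trans (a b c : mono V) : lexlt vgt a b -> lexlt vgt b c -> lexlt vgt a c.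
Proof. rewrite -rkgtE => H1 H2; apply: (@lexlt_trans _ _ (@rk_inj n lam mu) _ _ _ H1 H2). Qed.
Lemma lexT_irr (a : mono V) : ~ lexlt vgt a a.
Proof. rewrite -rkgtE; exact: lexlt_irr. Qed.
Lemma lexT_total (a b : mono V) : a <> b -> lexlt vgt a b \/ lexlt vgt b a.
Proof. rewrite -rkgtE; exact: lexlt_total. Qed.

Lemma rc_le (v : V) : (rw v <= cl v)%N.
Proof. exact: (Tpos_le Hmui). Qed.

Lemma SA_rc (a : V) : SA (rw a) (cl a) = Some a.
Proof. apply: (Sarr_of_Tarr); exact: Tarr_rc. Qed.

Lemma SA_cr (a : V) : SA (cl a) (rw a) = Some a.
Proof. apply: (Sarr_val Hmui); right; rewrite /rw /cl; exact: surjective_pairing. Qed.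

Lemma SA_prop i j (a : V) : SA i j = Some a -> (rw a = i /\ cl a = j) \/ (rw a = j /\ cl a = i).
Proof. by move/Sarr_some; rewrite /rw /cl => [[->|->]]; [left|right]. Qed.

Lemma TA_prop i j (a : V) : TA i j = Some a -> rw a = i /\ cl a = j.
Proof. by move/Tarr_some; rewrite /rw /cl => ->. Qed.

Lemma WTt z (a : V) : WT (z, true) a = (rw a == z).
Proof. by []. Qed.
Lemma WTf z (a : V) : WT (z, false) a = (cl a == z).
Proof. by []. Qed.

Lemma WS_val c (a : V) : WS c a = ((rw a == c) + (cl a == c))%N.
Proof. by []. Qed.

Lemma feq_sym (I : finType) (W : I -> V -> nat) m1 m2 : feq W m1 m2 -> feq W m2 m1.
Proof. by move=> /forallP H; apply/forallP => i; rewrite eq_sym. Qed.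

Lemma feq_trans (I : finType) (W : I -> V -> nat) m1 m2 m3 : feq W m1 m2 -> feq W m2 m3 -> feq W m1 m3.
Proof. by move=> /forallP H1 /forallP H2; apply/forallP => i; rewrite (eqP (H1 i)). Qed.

Lemma minS_bin g : minors2 (K := K) SA g ->
  exists a d b c, g = minorpoly K a d b c /\
    feq (@WS n lam mu) (madd (evar a) (evar d)) (madd (evar b) (evar c)).
Proof.
move=> [i [k [j [l [a [d [b [c [_ [_ [Ha [Hd [Hb [Hc ->]]]]]]]]]]]]]].
exists a, d, b, c; split=> //; apply/forallP => z; rewrite !cntD !cnt_evar !WS_val.
case/SA_prop: Ha => [[-> ->]|[-> ->]]; case/SA_prop: Hd => [[-> ->]|[-> ->]];
case/SA_prop: Hb => [[-> ->]|[-> ->]]; case/SA_prop: Hc => [[-> ->]|[-> ->]]; apply/eqP; lia.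
Qed.

Lemma minT_bin g : minors2 (K := K) TA g ->
  exists a d b c, g = minorpoly K a d b c /\
    feq (@WT n lam mu) (madd (evar a) (evar d)) (madd (evar b) (evar c)).
Proof.
move=> [i [k [j [l [a [d [b [c [_ [_ [Ha [Hd [Hb [Hc ->]]]]]]]]]]]]]].
exists a, d, b, c; split=> //.
have [E1 E2] := TA_prop Ha; have [E3 E4] := TA_prop Hd.
have [E5 E6] := TA_prop Hb; have [E7 E8] := TA_prop Hc.
apply/forallP => [[z []]]; rewrite !cntD !cnt_evar ?WTt ?WTf; apply/eqP.
  by rewrite E1 E3 E5 E7; lia.
by rewrite E2 E4 E6 E8; lia.
Qed.

Lemma minT_S g : minors2 (K := K) TA g -> minors2 (K := K) SA g.
Proof.
move=> [i [k [j [l [a [d [b [c [H1 [H2 [Ha [Hd [Hb [Hc ->]]]]]]]]]]]]]].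
exists i, k, j, l, a, d, b, c; do !split=> //; exact: Sarr_of_Tarr.
Qed.

Definition Sstd (m : mono V) := forall g mg, minors2 (K := K) SA g ->
  is_lead (lexlt vgt) g mg -> ~ mdiv mg m.

Lemma std_rc (m : mono V) : Sstd m -> forall u v, (0 < m u)%N -> (0 < m v)%N -> (rw v <= cl u)%N.
Proof.
move=> Hs u v Hu Hv; rewrite leqNgt; apply/negP => Hlt.
have [Hu1 Hu2 Hu3 Hu4] := vP4 u; have [Hv1 Hv2 Hv3 Hv4] := vP4 v.
have Hau := rc_le u; have Hav := rc_le v.
have Hmo : (mu (cl u) <= mu (rw v))%N by apply: (@mu_mono n mu Hmu); lia.
have Hla1 : (lam (rw v) <= lam (cl u))%N by apply: (@lam_anti n lam Hlam); lia.
have Hla2 : (lam (rw v) <= lam (rw u))%N by apply: (@lam_anti n lam Hlam); lia.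
have [w1 [Hw1 [Hw11 Hw12]]] : exists w : V, TA (cl u) (cl v) = Some w /\ rw w = cl u /\ cl w = cl v.
  by apply: Tarr_mk'; rewrite memTpos; lia.
have [w2 [Hw2 [Hw21 Hw22]]] : exists w : V, TA (rw u) (rw v) = Some w /\ rw w = rw u /\ cl w = rw v.
  by apply: Tarr_mk'; rewrite memTpos; lia.
apply: (Hs (minorpoly K u v w1 w2) (madd (evar u) (evar v))).
- exists (cl u), (rw v), (rw u), (cl v), u, v, w1, w2.
  do !split; try lia.
  + exact: SA_cr.
  + exact: SA_rc.
  + exact: Sarr_of_Tarr.
  + rewrite -Hw21 -Hw22; exact: SA_cr.
- apply: lead_top.
  + by apply/eqP => E; move: Hw12; rewrite E; lia.
  + by apply/eqP => E; move: Hw22; rewrite E; lia.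
  + by rewrite tvar_gtE ltnn eqxx ltnn.
  + move=> w; rewrite tvar_gtE => Hw.
    by apply/and3P; split; apply/eqP => E; subst w; move: Hw; lia.
- apply/mdivP => z; rewrite !ffunE.
  have Huv : u != v by apply/eqP => E; subst v; lia.
  case: (eqVneq z u) => [->|Hzu]; first by rewrite (negbTE Huv) addn0.
  by case: (eqVneq z v) => [->|]; [rewrite add0n | rewrite add0n].
Qed.

Definition Rc (m : mono V) s := (\sum_v (rw v <= s) * m v)%N.
Definition Cc (m : mono V) s := (\sum_v (cl v <= s) * m v)%N.

Lemma Rmin (m : mono V) s : (forall u v, (0 < m u)%N -> (0 < m v)%N -> (rw v <= cl u)%N) ->
  Rc m s = minn (mdeg m) (Rc m s + Cc m s).
Proof.
move=> H.
case: (classic (exists u, (0 < m u)%N /\ (cl u <= s)%N)) => [[u [Hu Hus]]|Hn].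
  have -> : Rc m s = mdeg m.
    apply: eq_bigr => v _; case: (posnP (m v)) => [->|Hv]; first by rewrite muln0.
    by rewrite (leq_trans (H u v Hu Hv) Hus) mul1n.
  by apply/esym/minn_idPl; rewrite leq_addr.
have -> : Cc m s = 0%N.
  apply: big1 => v _; case: (posnP (m v)) => [->|Hv]; first by rewrite muln0.
  case: leqP => // Hvs; exfalso; apply: Hn; exists v; split => //.
rewrite addn0; apply/esym/minn_idPr; apply: leq_sum => v _.
by case: (rw v <= s)%N; rewrite ?mul1n ?mul0n.
Qed.

Lemma stdS_feqT (m1 m2 : mono V) : feq (@WS n lam mu) m1 m2 ->
  (forall u v, (0 < m1 u)%N -> (0 < m1 v)%N -> (rw v <= cl u)%N) ->
  (forall u v, (0 < m2 u)%N -> (0 < m2 v)%N -> (rw v <= cl u)%N) ->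
  feq (@WT n lam mu) m1 m2.
Proof.
move=> Hf H1 H2.
have ER : forall s, Rc m1 s = Rc m2 s.
  move=> s; rewrite (Rmin s H1) (Rmin s H2) (HdegS Hf).
  congr minn; rewrite /Rc /Cc -!big_split /=.
  have := @feqS_sum n lam mu _ _ (fun c => nat_of_bool (c <= s)%N) Hf.
  move=> H; rewrite -(eq_bigr _ (fun v _ => mulnDl _ _ (m1 v))) -(eq_bigr _ (fun v _ => mulnDl _ _ (m2 v))). exact: H.
have Erow : forall c : nat, (\sum_v (rw v == c) * m1 v = \sum_v (rw v == c) * m2 v)%N.
  move=> c.
  have P : forall m : mono V, (\sum_v (rw v == c) * m v + Rc m c.-1 = Rc m c)%N.
    move=> m; rewrite /Rc -big_split /=; apply: eq_bigr => v _; rewrite -mulnDl.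
    congr (_ * _)%N; have [Hv1 _ _ _] := vP4 v.
    case: (ltngtP (rw v) c) => Hc; try lia.
  by apply/eqP; rewrite -(eqn_add2r (Rc m1 c.-1)) {2}ER !P ER.
apply/forallP => [[c []]]; rewrite /WT /=; first by rewrite /cnt; apply/eqP; exact: Erow.
move/forallP: Hf => /(_ c) /eqP.
rewrite /cnt; under eq_bigr do rewrite WS_val mulnDl; under [in RHS]eq_bigr do rewrite WS_val mulnDl.
rewrite !big_split /= Erow => /eqP; rewrite eqn_add2l => /eqP ->; by [].
Qed.

End SC.

Section SC2.
Variables (K : fieldType) (n : nat) (lam mu : nat -> nat).
Hypothesis Hlam : forall i, (1 <= i)%N -> (i < n)%N -> (lam i.+1 <= lam i)%N.
Hypothesis Hmu : forall i, (1 <= i)%N -> (i < n)%N -> (mu i <= mu i.+1)%N.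
Hypothesis Hmui : forall i, (1 <= i <= n)%N -> (i.-1 <= mu i)%N.
Local Notation V := (TVar n lam mu).
Local Notation TA := (@Tarr n lam mu).
Local Notation SA := (@Sarr n lam mu).
Local Notation vgt := (@tvar_gt n lam mu).

Lemma lexT_add (a b c : mono V) : lexlt vgt a b -> lexlt vgt (madd c a) (madd c b).
Proof. rewrite -rkgtE; exact: lexlt_add. Qed.

Lemma S_comb (M m' : mono V) : feq (@WS n lam mu) m' M -> lexlt vgt m' M ->
  exists g mg, minors2 (K := K) SA g /\ is_lead (lexlt vgt) g mg /\ mdiv mg M.
Proof.
move=> Hf Hlt; apply: NNPP => Hn.
have HstdM : Sstd K M by move=> g mg Hg Hl Hd; apply: Hn; exists g, mg.
have Hdeg := @HdegS n lam mu.
set l := fibl (@WS n lam mu) M.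
have Hml : m' \in l by rewrite (mem_fibl Hdeg).
have Hl0 : l != [::] by apply/eqP => E; rewrite E in Hml.
have [m0 [Hm0 Hmin]] := @list_max _ (fun a b => lexlt vgt b a)
  (fun a b c H1 H2 => lexT_trans H2 H1)
  (fun a b H => match lexT_total H with or_introl h => or_intror h | or_intror h => or_introl h end)
  l Hl0.
have Hf0 : feq (@WS n lam mu) m0 M by rewrite -(mem_fibl Hdeg).
have Hstd0 : Sstd K m0.
  move=> g mg Hg Hlead Hd.
  have [a [d [b [c [Eg Hpq]]]]] := minS_bin Hg; subst g.
  have [o [Ho Hlo Hne]] := lead_cases Hlead.
  have Hfo : feq (@WS n lam mu) o mg.
    by case/orP: Ho => /andP [/eqP -> /eqP ->]; [exact: feq_sym Hpq | exact: Hpq].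
  pose m'' := madd (msub m0 mg) o.
  have Hf'' : feq (@WS n lam mu) m'' M.
    apply: feq_trans Hf0; apply/forallP => z.
    by rewrite /m'' -[X in _ == cnt _ X](msubK Hd) !cntD (eqP (forallP Hfo z)).
  have Hlt'' : lexlt vgt m'' m0 by rewrite /m'' -[X in lexlt _ _ X](msubK Hd); exact: lexT_add.
  have : m'' \in l by rewrite (mem_fibl Hdeg).
  case/Hmin => [E|H]; first by rewrite E in Hlt''; exact: lexT_irr Hlt''.
  exact: lexT_irr (lexT_trans H Hlt'').
have HT : feq (@WT n lam mu) m0 M.
  exact: stdS_feqT Hf0 (std_rc Hlam Hmu Hmui Hstd0) (std_rc Hlam Hmu Hmui HstdM).
have Hlt0 : lexlt vgt m0 M.
  by case: (Hmin m' Hml) => [<-|H] //; exact: lexT_trans H Hlt.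
have [g [mg [Hg [Hl Hd]]]] := T_comb K Hlam HT Hlt0.
exact: (HstdM g mg (minT_S Hg) Hl Hd).
Qed.
End SC2.

Theorem theorem2p4 (K : fieldType) (n : nat) (lam mu : nat -> nat) :
  (1 <= n)%N ->
  (forall i, (1 <= i <= n)%N -> (0 < lam i)%N) ->
  (forall i, (1 <= i)%N -> (i < n)%N -> (lam i.+1 <= lam i)%N) ->
  (forall i, (1 <= i)%N -> (i < n)%N -> (mu i <= mu i.+1)%N) ->
  (mu n < lam n)%N ->
  (forall i, (1 <= i <= n)%N -> (i.-1 <= mu i)%N) ->
  groebner (K := K) (lexlt (@tvar_gt n lam mu)) (minors2 (@Tarr n lam mu))
  /\ groebner (K := K) (lexlt (@tvar_gt n lam mu)) (minors2 (@Sarr n lam mu)).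
Proof.
move=> _ _ Hlam Hmu _ Hmui.
rewrite -!rkgtE; split.
- apply: (gen_groebner (@HdegT n lam mu) (@rk_inj n lam mu)).
    move=> g /minT_bin [a [d [b [c [-> H]]]]].
    by exists (madd (evar a) (evar d)), (madd (evar b) (evar c)).
  move=> M m' Hf; rewrite rkgtE => Hlt.
  exact: (@T_comb K n lam mu Hlam M m' Hf Hlt).
- apply: (gen_groebner (@HdegS n lam mu) (@rk_inj n lam mu)).
    move=> g /minS_bin [a [d [b [c [-> H]]]]].
    by exists (madd (evar a) (evar d)), (madd (evar b) (evar c)).
  move=> M m' Hf; rewrite rkgtE => Hlt; exact: (@S_comb K n lam mu Hlam Hmu Hmui M m' Hf Hlt).
Qed.
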